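(* Let $n\ge 4$, let $\mathcal C$ be a maximal independent set of the cycle $C_n$, and let $G$ be the $\mathcal C$-suspension of $C_n$. Then $G$ is pseudo-Gorenstein$^{*}$ if and only if one of the following holds: (a) $n\equiv 0,3\pmod{12}$ and $|\mathcal C|=\lceil n/3\rceil$; (b) $n\equiv 4,7,8,11\pmod{12}$ and $|\mathcal C|=\lfloor n/2\rfloor$; (c) $n\equiv 1,2,5,10\pmod{12}$ and $|\mathcal C|\ne\lfloor n/2\rfloor$.
   Context: For $\varnothing\ne C\subseteq V(G)$, the $C$-suspension of $G$ is obtained by adding a new vertex $z$ adjacent exactly to the vertices of $C$. $C_n$ is the cycle on $n$ vertices, with independence number $\lfloor n/2\rfloor$. For a finite simple graph $G$ on vertex set $[N]$, let $S=K[x_1,\dots,x_N]$ ($K$ a field) and $I(G)$ the edge ideal generated by $x_ix_j$, $\{i,j\}\in E(G)$. Let $\alpha(G)$ be the independence number (equal to $\dim S/I(G)$). Write the Hilbert series of $S/I(G)$ uniquely as $(h_0+\dots+h_st^s)/(1-t)^{\alpha(G)}$ with $h_s\ne 0$, and $\mathfrak a(G)=s-\alpha(G)$. $G$ is pseudo-Gorenstein$^{*}$ if $h_s=1$ and $\mathfrak a(G)=0$. *)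

(* Defs.v *)
From mathcomp Require Import all_boot all_order all_algebra.
Set Implicit Arguments. Unset Strict Implicit. Unset Printing Implicit Defensive.
Import GRing.Theory.

(* A finite simple graph on vertex set 'I_N = {0,..,N-1} is given by a
   symmetric irreflexive adjacency relation e : rel 'I_N. *)

Definition independent (N : nat) (e : rel 'I_N) (A : {set 'I_N}) : bool :=
  [forall x in A, forall y in A, ~~ e x y].

Definition maximal_independent (N : nat) (e : rel 'I_N) (A : {set 'I_N}) : Prop :=
  independent e A /\
  forall B : {set 'I_N}, independent e B -> A \subset B -> B = A.

Definition indep_num (N : nat) (e : rel 'I_N) : nat :=
  \max_(A : {set 'I_N} | independent e A) #|A|.

Definition cycle_rel (n : nat) : rel 'I_n :=
  fun i j => (val j == (val i).+1 %% n) || (val i == (val j).+1 %% n).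

(* C-suspension: new vertex z = ord_max of 'I_N.+1, adjacent exactly to C *)
Definition suspension (N : nat) (e : rel 'I_N) (C : {set 'I_N}) : rel 'I_N.+1 :=
  fun x y =>
    match unlift ord_max x, unlift ord_max y with
    | Some a, Some b => e a b
    | None, Some b => b \in C
    | Some a, None => a \in C
    | None, None => false
    end.

(* Hilbert function of S/I(G): (S/I(G))_d has as K-basis the monomials
   x^m of degree d not in the monomial ideal I(G), i.e. not divisible by
   any x_i x_j with {i,j} an edge.  A monomial of degree d is an exponent
   vector m : 'I_N -> {0..d} with sum d. *)
Definition hilb_fun (N : nat) (e : rel 'I_N) (d : nat) : nat :=
  #|[set m : {ffun 'I_N -> 'I_d.+1} |
      (\sum_(i < N) (m i : nat) == d) &&
      [forall i, forall j, e i j ==> ((val (m i) == 0) || (val (m j) == 0))]]|.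

(* Coefficients of h(t) = (1-t)^alpha * HS(t), where HS(t) = sum_d H(d) t^d;
   so HS(t) = (h_0 + ... + h_s t^s)/(1-t)^alpha. *)
Definition hcoef (N : nat) (e : rel 'I_N) (k : nat) : int :=
  \sum_(j < k.+1) ((-1) ^+ j * ('C(indep_num e, j))%:Z * (hilb_fun e (k - j))%:Z)%R.

(* pseudo-Gorenstein^*: the numerator has degree s = alpha (a(G) = 0)
   and leading coefficient h_s = 1. *)
Definition pseudo_gorenstein_star (N : nat) (e : rel 'I_N) : Prop :=
  hcoef e (indep_num e) = 1%R /\
  forall k, indep_num e < k -> hcoef e k = 0%R.

(* Main.v *)
Require Import Defs.
From mathcomp Require Import all_boot all_order all_algebra.
From mathcomp Require Import zify ring.
Set Implicit Arguments. Unset Strict Implicit. Unset Printing Implicit Defensive.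
Import GRing.Theory Num.Theory.


Section Gen.
Variables (N : nat) (e : rel 'I_N).
Hypothesis esym : symmetric e.
Hypothesis eirr : irreflexive e.

Lemma indepP (F : {set 'I_N}) :
  reflect (forall x y, x \in F -> y \in F -> ~~ e x y) (independent e F).
Proof.
apply: (iffP forall_inP) => [H x y xF yF | H x xF].
  by move/forall_inP: (H x xF) => /(_ y yF).
by apply/forall_inP => y yF; apply: H.
Qed.

Definition nbh (v : 'I_N) := v |: [set u | e v u].

Definition BG (R : Type) (idx : R) (op : R -> R -> R) (g : nat -> R)
  (W : {set 'I_N}) :=
  \big[op/idx]_(F : {set 'I_N} | (F \subset W) && independent e F) g #|F|.

Lemma indepU1 v (F : {set 'I_N}) :
  independent e (v |: F) = independent e F && [forall u in F, ~~ e v u].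
Proof.
apply/indepP/andP => [H | [/indepP H /forall_inP H2] x y].
  split; first by apply/indepP => x y xF yF; apply: H; rewrite in_setU1 ?xF ?yF orbT.
  by apply/forall_inP => u uF; apply: H; rewrite in_setU1 ?uF ?eqxx ?orbT.
rewrite !in_setU1 => /orP[/eqP-> | xF] /orP[/eqP-> | yF].
- by rewrite eirr.
- exact: H2.
- by rewrite esym; apply: H2.
- exact: H.
Qed.

Lemma BG_rec (R : Type) (idx : R) (op : Monoid.com_law idx) (g : nat -> R) (v : 'I_N) (W : {set 'I_N}) :
  v \in W ->
  BG idx op g W = op (BG idx op g (W :\ v)) (BG idx op (fun k => g k.+1) (W :\: nbh v)).
Proof.
move=> vW; rewrite /BG (bigID (fun F : {set 'I_N} => v \notin F)) /=.
congr (op _ _).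
  by apply: eq_bigl => F; rewrite subsetD1 andbAC.
rewrite (reindex_onto (fun F => v |: F) (fun F => F :\ v)) /=; last first.
  by move=> F /andP[_]; rewrite negbK => vF; rewrite setD1K.
apply: eq_big => F.
  apply/idP/idP.
    move=> /andP[/andP[/andP[sub ind] _] /eqP eqF].
    have vF : v \notin F by rewrite -eqF setD11.
    move: ind; rewrite indepU1 => /andP[indF /forall_inP nb].
    rewrite indF andbT; apply/subsetP => u uF.
    rewrite in_setD /nbh in_setU1 inE negb_or nb // andbT.
    rewrite (subsetP sub) ?andbT; last by rewrite in_setU1 uF orbT.
    by apply: contraNneq vF => <-.
  move=> /andP[sub indF].
  have vF : v \notin F.
    by apply/negP => vF; move: (subsetP sub v vF); rewrite in_setD /nbh setU11.
  rewrite setU1K // eqxx andbT setU11 andbT indepU1 indF /=.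
  apply/andP; split.
    apply/subsetP => u; rewrite in_setU1 => /orP[/eqP-> //|uF].
    by move: (subsetP sub u uF); rewrite in_setD => /andP[].
  apply/forall_inP => u uF; move: (subsetP sub u uF).
  by rewrite in_setD /nbh in_setU1 inE negb_or => /andP[/andP[_ ->]].
move=> /andP[/andP[_ _] /eqP eqF].
have vF : v \notin F by rewrite -eqF setD11.
by rewrite cardsU1 vF.
Qed.

End Gen.


Lemma BG_transport (n N : nat) (e : rel 'I_n) (e' : rel 'I_N) (f : 'I_n -> 'I_N)
  (R : Type) (idx : R) (op : Monoid.com_law idx) (g : nat -> R) (W : {set 'I_n}) :
  injective f -> (forall a b, e' (f a) (f b) = e a b) ->
  BG e' idx op g (f @: W) = BG e idx op g W.
Proof.
move=> finj fe.
have indf (F : {set 'I_n}) : independent e' (f @: F) = independent e F.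
  apply/indepP/indepP => H x y xF yF.
    by rewrite -fe; apply: H; apply: imset_f.
  by case/imsetP: xF => a aF ->; case/imsetP: yF => b bF ->; rewrite fe; apply: H.
rewrite /BG (reindex_onto (fun F : {set 'I_n} => f @: F) (fun F : {set 'I_N} => f @^-1: F)) /=; last first.
  move=> F /andP[sub _]; apply/setP => y; apply/imsetP/idP.
    by case=> x; rewrite inE => xF ->.
  move=> yF; case/imsetP: (subsetP sub y yF) => x _ eq; exists x => //.
  by rewrite inE -eq.
apply: eq_big => F; last by move=> _; rewrite card_imset.
have -> : f @^-1: (f @: F) == F.
  by apply/eqP/setP => x; rewrite inE mem_imset.
rewrite andbT indf; congr (_ && _).
apply/subsetP/subsetP => H x.
  by move=> xF; move: (H (f x)); rewrite !mem_imset //; apply.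
by case/imsetP => a aF ->; rewrite mem_imset //; apply: H.
Qed.

Section Gen2.
Variables (N : nat) (e : rel 'I_N).
Hypothesis esy : symmetric e.
Hypothesis eirr : irreflexive e.

Definition IS (W : {set 'I_N}) : int :=
  BG e 0%R +%R (fun k => (-1) ^+ k)%R W.

Lemma IS_rec (v : 'I_N) (W : {set 'I_N}) : v \in W -> IS W = (IS (W :\ v) - IS (W :\: nbh e v))%R.
Proof.
move=> vW; rewrite /IS (BG_rec esy eirr _ _ vW) /=; congr (_ + _)%R.
by rewrite /BG -sumrN; apply: eq_bigr => F _; rewrite exprS mulN1r.
Qed.

Lemma IS0 : IS set0 = 1%R.
Proof.
rewrite /IS /BG (big_pred1 set0) ?cards0 // => F /=.
rewrite subset0; case: eqP => // ->; apply/forall_inP => x; by rewrite inE.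
Qed.

Lemma IS_isolated (v : 'I_N) (W : {set 'I_N}) : v \in W -> (forall u, u \in W -> ~~ e v u) -> IS W = 0%R.
Proof.
move=> vW H; rewrite (IS_rec vW).
suff -> : W :\: nbh e v = W :\ v by rewrite subrr.
apply/setP => u; rewrite /nbh !inE negb_or.
by case: (u =P v) => //= _; case uW: (u \in W); rewrite ?andbF // H.
Qed.

Lemma IS_matching m (W : {set 'I_N}) : #|W| = (2 * m)%N ->
  (forall v, v \in W -> exists u, [set x in W | e v x] = [set u]) ->
  IS W = ((-1) ^+ m)%R.
Proof.
elim: m W => [|m IH] W cW H.
  by move/eqP: cW; rewrite muln0 cards_eq0 => /eqP->; rewrite IS0.
have : (0 < #|W|)%N by rewrite cW; lia.
case/card_gt0P => v vW.
case: (H v vW) => u Nu.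
have uW : u \in W by move/setP: Nu => /(_ u); rewrite !inE eqxx => /andP[].
have evu : e v u by move/setP: Nu => /(_ u); rewrite !inE eqxx => /andP[].
have uv : u != v by apply: contraTneq evu => ->; rewrite eirr.
have Nu' : forall x, x \in W -> e v x -> x = u.
  by move=> x xW exv; move/setP: Nu => /(_ x); rewrite !inE xW exv => /esym/eqP.
have Nv' : forall x, x \in W -> e u x -> x = v.
  move=> x xW eux; case: (H u uW) => t Nt.
  have: x \in [set t] by rewrite -Nt inE xW.
  have: v \in [set t] by rewrite -Nt inE vW esy.
  by rewrite !inE => /eqP-> /eqP->.
rewrite (IS_rec vW).
rewrite (@IS_isolated u); last 2 first.
- by rewrite in_setD1 uv.
- move=> x; rewrite in_setD1 => /andP[xv xW]; apply/negP => eux.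
  by move: xv; rewrite (Nv' x xW eux) eqxx.
have -> : W :\: nbh e v = W :\ u :\ v.
  apply/setP => x; rewrite /nbh !inE negb_or.
  case: (x =P v) => //= _; case xW: (x \in W); rewrite ?andbF //= andbT.
  case: (x =P u) => [->|xu]; first by rewrite evu.
  by apply/negP => exv; apply: xu; apply: Nu'.
rewrite (IH (W :\ u :\ v)).
- by rewrite exprS mulN1r sub0r.
- move: cW; rewrite (cardsD1 u W) uW (cardsD1 v (W :\ u)) in_setD1 vW eq_sym uv.
  lia.
move=> x; rewrite !in_setD1 => /andP[xv /andP[xu xW]].
case: (H x xW) => t Nt; exists t; rewrite -Nt; apply/setP => y; rewrite !inE.
have yv : e x y -> y != v.
  by move=> exy; apply: contra_neq xu => yv; apply: Nu' => //; rewrite esy -yv.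
have yu : e x y -> y != u.
  by move=> exy; apply: contra_neq xv => yu; apply: Nv' => //; rewrite esy -yu.
case exy: (e x y); rewrite ?andbF ?andbT //.
by rewrite (yv exy) (yu exy).
Qed.

Definition Alpha (W : {set 'I_N}) : nat := BG e 0%N maxn id W.

Lemma Alpha_rec (v : 'I_N) (W : {set 'I_N}) : v \in W ->
  Alpha W = maxn (Alpha (W :\ v)) (Alpha (W :\: nbh e v)).+1.
Proof.
move=> vW; rewrite /Alpha (BG_rec esy eirr _ _ vW) /=; congr maxn.
rewrite /BG.
have P0 : (set0 \subset W :\: nbh e v) && independent e set0.
  by rewrite sub0set; apply/forall_inP => x; rewrite inE.
apply/eqP; rewrite eqn_leq; apply/andP; split.
  apply/bigmax_leqP => F PF /=; rewrite ltnS.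
  by apply: leq_bigmax_cond.
case: (@arg_maxnP _ set0 (fun F => (F \subset W :\: nbh e v) && independent e F)
   (fun F => #|F|) P0) => F1 PF1 max1.
have -> : \max_(F : {set 'I_N} | (F \subset W :\: nbh e v) && independent e F) #|F| = #|F1|.
  apply/eqP; rewrite eqn_leq (leq_bigmax_cond F1 PF1) andbT.
  by apply/bigmax_leqP.
exact: (@leq_bigmax_cond _ _ (fun F : {set 'I_N} => #|F|.+1) F1 PF1).
Qed.

Lemma Alpha_le (W : {set 'I_N}) k : (forall F : {set 'I_N}, F \subset W -> independent e F -> (#|F| <= k)%N) ->
  (Alpha W <= k)%N.
Proof. by move=> H; apply/bigmax_leqP => F /andP[]; apply: H. Qed.

Lemma Alpha_ge (W F : {set 'I_N}) : F \subset W -> independent e F -> (#|F| <= Alpha W)%N.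
Proof.
by move=> s i; apply: (@leq_bigmax_cond _ _ (fun F : {set 'I_N} => #|F|)); rewrite s i.
Qed.

End Gen2.


Fixpoint Nf (f d : nat) : nat :=
  match f with
  | 0 => (d == 0 : nat)
  | f'.+1 => \sum_(1 <= v < d.+1) Nf f' (d - v)
  end.

Section Cnt.
Variables (N D : nat).
Implicit Types (m : {ffun 'I_N -> 'I_D.+1}) (F : {set 'I_N}).

Definition supp m : {set 'I_N} := [set i | val (m i) != 0].
Definition msum m : nat := \sum_(i < N) (m i : nat).
Definition cnt F d :=
  #|[set m : {ffun 'I_N -> 'I_D.+1} | (msum m == d) && (supp m == F)]|.

Definition upd m x (j : 'I_D.+1) : {ffun 'I_N -> 'I_D.+1} :=
  [ffun i => if i == x then j else m i].

Lemma card_sum1 (P : pred {ffun 'I_N -> 'I_D.+1}) :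
  #|[set m | P m]| = \sum_(m | P m) 1.
Proof. by rewrite -sum1_card; apply: eq_bigl => m; rewrite inE. Qed.

Lemma msum_upd m x j : msum (upd m x j) + m x = j + msum m.
Proof.
rewrite /msum [X in X + _](bigD1 x) // [X in _ = _ + X](bigD1 x) //= ffunE eqxx.
under eq_bigr => i ix do rewrite ffunE (negbTE ix).
lia.
Qed.

Lemma supp_upd m x (j : 'I_D.+1) : j != 0 :> nat -> supp (upd m x j) = x |: (supp m :\ x).
Proof.
move=> j0; apply/setP => i; rewrite !inE ffunE.
by case: (i =P x) => //= ->.
Qed.

Lemma cnt0 d : cnt set0 d = (d == 0 : nat).
Proof.
rewrite /cnt.
have sup0 m : (supp m == set0) = (m == [ffun => ord0]).
  apply/eqP/eqP => [H|->].
    apply/ffunP => i; rewrite ffunE; apply/val_inj => /=.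
    by move/setP: H => /(_ i); rewrite !inE => /negbFE/eqP.
  by apply/setP => i; rewrite !inE ffunE.
have s0 : msum [ffun => ord0] = 0.
  by rewrite /msum big1 // => i _; rewrite ffunE.
case: (d =P 0) => [->|dn0] /=.
  rewrite -(cards1 ([ffun => ord0] : {ffun 'I_N -> 'I_D.+1})); apply: eq_card => m.
  rewrite !inE sup0.
  by case: (m =P _) => [->|]; rewrite ?s0 ?andbF.
apply: eq_card0 => m; rewrite !inE sup0.
by case: (m =P _) => [->|]; rewrite ?s0 ?andbF ?andbT //; case: eqP => // /esym.
Qed.

Lemma cnt_step F x d : x \in F -> d <= D ->
  cnt F d = \sum_(1 <= v < d.+1) cnt (F :\ x) (d - v).
Proof.
move=> xF dD; rewrite /cnt card_sum1.
rewrite (partition_big (fun m => m x) xpredT) //=.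
pose G (j : nat) := \sum_(m | ((msum m == d) && (supp m == F)) && (val (m x) == j)) 1.
have -> : \sum_(j < D.+1) \sum_(m | ((msum m == d) && (supp m == F)) && (m x == j)) 1
   = \sum_(j < D.+1) G j.
  by apply: eq_bigr => j _; apply: eq_bigl => m.
rewrite -(big_mkord xpredT G).
rewrite (big_cat_nat _ (n := 1)) //= (big_cat_nat _ (m := 1) (n := d.+1)) //=.
have G0 : G 0 = 0.
  rewrite /G big1 // => m /andP[/andP[_ /eqP sF] /eqP mx].
  by move: xF; rewrite -sF inE mx eqxx.
rewrite big_nat1 G0 add0n.
have -> : \sum_(d.+1 <= i < D.+1) G i = 0.
  rewrite big_nat_cond big1 // => j /andP[/andP[dj _] _].
  rewrite /G big1 // => m /andP[/andP[/eqP sm _] /eqP mx].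
  have : (m x <= msum m)%N by rewrite /msum (bigD1 x) //=; apply: leq_addr.
  change (nat_of_ord (m x) = j) in mx; move: sm mx dj; lia.
rewrite addn0 big_nat_cond [RHS]big_nat_cond; apply: eq_bigr => v /andP[/andP[v1 vd] _].
have vD : v < D.+1 by lia.
pose j := Ordinal vD.
rewrite card_sum1 /G.
rewrite (reindex_onto (fun m => upd m x j) (fun m => upd m x ord0)) /=; last first.
  move=> m /andP[_ /eqP mx]; apply/ffunP => i; rewrite !ffunE.
  by case: (i =P x) => // ->; apply/val_inj; rewrite /= mx.
apply: eq_bigl => m.
have j0 : j != 0 :> nat by rewrite /=; lia.
have Eupd : (upd (upd m x j) x ord0 == m) = (val (m x) == 0).
  apply/eqP/eqP => [<-|mx]; first by rewrite ffunE eqxx.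
  apply/ffunP => i; rewrite !ffunE.
  by case: (i =P x) => // ->; apply/val_inj; rewrite /= mx.
rewrite Eupd ffunE eqxx eqxx andbT supp_upd //.
have := msum_upd m x j; rewrite /= => sE.
apply/idP/idP.
  move=> /andP[/andP[/eqP s1 /eqP s2] /eqP mx].
  change (nat_of_ord (m x) = 0) in mx.
  rewrite -s2 setU1K ?setD11 //; apply/andP; split.
    by apply/eqP; move: sE; rewrite mx s1; lia.
  apply/eqP/setP => i; rewrite !inE; case: (i =P x) => // ->.
  by rewrite /=; apply/negbTE; rewrite negbK; apply/eqP.
move=> /andP[/eqP s1 /eqP s2].
have mx : nat_of_ord (m x) == 0.
  by have := setD11 x F; rewrite -s2 inE => /negbFE.
have -> : (val (m x) == 0) = true by [].
rewrite andbT; apply/andP; split.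
  by apply/eqP; move/eqP: mx => mx; move: sE; rewrite mx s1; lia.
apply/eqP/setP => i; rewrite s2 !inE; case: (i =P x) => // ->.
by rewrite xF.
Qed.

Lemma cnt_Nf f : forall F d, #|F| = f -> d <= D -> cnt F d = Nf f d.
Proof.
elim: f => [|f IH] F d cF dD.
  by move/eqP: cF; rewrite cards_eq0 => /eqP->; rewrite cnt0.
have : 0 < #|F| by rewrite cF.
case/card_gt0P => x xF.
rewrite (cnt_step xF dD) /=; apply: eq_big_nat => v /andP[v1 vd].
apply: IH; last by lia.
by move: cF; rewrite (cardsD1 x F) xF; lia.
Qed.

End Cnt.

Lemma hilb_cnt (N : nat) (e : rel 'I_N) d :
  hilb_fun e d = \sum_(F : {set 'I_N} | independent e F) Nf #|F| d.
Proof.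
rewrite /hilb_fun card_sum1.
rewrite (partition_big (fun m => supp m) (fun F => independent e F)) /=.
  apply: eq_bigr => F indF; rewrite -(cnt_Nf (D := d) (F := F) erefl) //.
  rewrite /cnt card_sum1; apply: eq_bigl => m.
  case: (supp m =P F) => [sF|]; rewrite ?andbF ?andbT //.
  rewrite /msum; case: (_ == d) => //=.
  apply/forallP => i; apply/forallP => j; apply/implyP => eij.
  move/indepP: indF => /(_ i j); rewrite -sF !inE.
  case: eqP => //= _; case: eqP => //= _.
  by rewrite eij => /(_ isT isT).
move=> m /andP[_ /forallP H]; apply/indepP => i j; rewrite !inE => mi mj.
apply/negP => eij; move/forallP: (H i) => /(_ j) /implyP /(_ eij).
by rewrite (negbTE mi) (negbTE mj).
Qed.

Section Sec_H2.
Local Open Scope ring_scope.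

Lemma Nf_S0 f : Nf f.+1 0 = 0%N.
Proof. by rewrite /= big_geq. Qed.

Lemma Nf_succ f d : Nf f.+1 d.+1 = (Nf f.+1 d + Nf f d)%N.
Proof.
rewrite /= big_nat_recl // subn1 /= addnC; congr (_ + _)%N.
Qed.

Definition E (a f k : nat) : int :=
  \sum_(j < k.+1) (-1) ^+ j * ('C(a, j))%:Z * (Nf f (k - j)%N)%:Z.

Lemma E_step a f k : E a.+1 f.+1 k.+1 = E a f k.
Proof.
set s := fun j : nat => ((-1) ^+ j : int).
set N' := Nf f.+1.
set A := \sum_(j < k.+2) s j * ('C(a, j))%:Z * (N' (k.+1 - j)%N)%:Z.
have S1 : E a.+1 f.+1 k.+1 = A + \sum_(j < k.+1) s j.+1 * ('C(a, j))%:Z * (N' (k - j)%N)%:Z.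
  rewrite /E /A big_ord_recl [X in _ = X + _]big_ord_recl !bin0 -addrA.
  congr (_ + _); rewrite -big_split; apply: eq_bigr => i _.
  by rewrite lift0 subSS binS PoszD !mulrDr !mulrDl.
have S2 : A = \sum_(j < k.+1) s j * ('C(a, j))%:Z * ((N' (k - j)%N)%:Z + (Nf f (k - j)%N)%:Z).
  rewrite /A big_ord_recr /= subnn /N' Nf_S0 mulr0 addr0.
  apply: eq_bigr => i _; rewrite -PoszD -Nf_succ subSn //.
  by have := ltn_ord i; rewrite ltnS.
rewrite S1 S2 /E -big_split /=; apply: eq_bigr => i _.
rewrite /s exprS; ring.
Qed.

Lemma E_val f : forall a k, (f <= a)%N ->
  E a f k = if (f <= k)%N then (-1) ^+ (k - f) * ('C(a - f, k - f))%:Z else 0.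
Proof.
elim: f => [|f IH] a k fa.
  rewrite /E !subn0 (bigD1 ord_max) //= subnn /= mulr1 big1 ?addr0 // => i /negbTE.
  move=> H; have : (k - i)%N != 0%N.
    apply: contraFneq H => H; apply/eqP/val_inj => /=.
    by have := ltn_ord i; lia.
  by move/negbTE => ->; rewrite mulr0.
case: a fa => [//|a] fa.
case: k => [|k].
  by rewrite /E big_ord1 subnn Nf_S0 mulr0.
by rewrite E_step IH.
Qed.

Lemma hcoef_sum (N : nat) (e : rel 'I_N) k :
  hcoef e k = \sum_(F : {set 'I_N} | independent e F) E (indep_num e) #|F| k.
Proof.
rewrite /hcoef /E.
under eq_bigr => j _ do rewrite hilb_cnt (big_morph Posz PoszD (erefl (Posz 0))) mulr_sumr.
by rewrite exchange_big.
Qed.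

End Sec_H2.

Section Sec_H3.
Local Open Scope ring_scope.

Lemma sign_sq (f : nat) : ((-1) ^+ f * (-1) ^+ f : int) = 1.
Proof. by rewrite -exprD addnn -mul2n exprM expr2 mulrNN mulr1 expr1n. Qed.

Lemma sign_sub (a f : nat) : (f <= a)%N -> ((-1) ^+ (a - f) : int) = (-1) ^+ a * (-1) ^+ f.
Proof.
move=> fa; rewrite -{2}(subnK fa) exprD -mulrA sign_sq mulr1 //.
Qed.

Lemma indep_le (N : nat) (e : rel 'I_N) (F : {set 'I_N}) :
  independent e F -> (#|F| <= indep_num e)%N.
Proof. by move=> iF; apply: (@leq_bigmax_cond _ _ (fun F : {set 'I_N} => #|F|)). Qed.

Lemma PG_iff (N : nat) (e : rel 'I_N) :
  pseudo_gorenstein_star e <-> IS e setT = (-1) ^+ (indep_num e).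
Proof.
set a := indep_num e.
have Hk k : (a < k)%N -> hcoef e k = 0.
  move=> ak; rewrite hcoef_sum big1 // => F iF.
  have fa := indep_le iF.
  rewrite E_val // ifT; last by lia.
  by rewrite bin_small ?mulr0 //; lia.
have Ha : hcoef e a = (-1) ^+ a * IS e setT.
  rewrite hcoef_sum /IS /BG mulr_sumr; apply: eq_big => F; first by rewrite subsetT.
  move=> iF; have fa := indep_le iF.
  by rewrite E_val // fa binn mulr1 sign_sub.
rewrite /pseudo_gorenstein_star Ha; split.
  by move=> [H _]; have := congr1 (fun x => (-1) ^+ a * x) H; rewrite /= mulrA sign_sq mul1r mulr1.
move=> ->; split; first exact: sign_sq.
exact: Hk.
Qed.

End Sec_H3.


Fixpoint pv (k : nat) : int :=
  match k with
  | 0 => 1%R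
  | 1 => 0%R
  | (k'.+1 as k1).+1 => (pv k1 - pv k')%R
  end.

Lemma valE m (u : 'I_m) : val u = nat_of_ord u. Proof. by []. Qed.

Section Cyc.
Variable n : nat.
Hypothesis n4 : 3 < n.

Lemma modS_val (u : nat) : u < n -> u.+1 %% n = if u.+1 == n then 0 else u.+1.
Proof.
move=> un; case: eqP => [->|h]; first by rewrite modnn.
by rewrite modn_small //; lia.
Qed.

Lemma cycE (u w : 'I_n) : cycle_rel u w =
  [|| (w == u.+1 :> nat), (u.+1 == n) && (w == 0 :> nat),
      (u == w.+1 :> nat) | (w.+1 == n) && (u == 0 :> nat)].
Proof.
rewrite /cycle_rel /= !modS_val //.
have := ltn_ord u; have := ltn_ord w.
by case: (u.+1 =P n) => h1; case: (w.+1 =P n) => h2 /=; rewrite ?valE; lia.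
Qed.

Lemma cyc_sym : symmetric (@cycle_rel n).
Proof. by move=> u w; rewrite /cycle_rel orbC. Qed.

Lemma cyc_irr : irreflexive (@cycle_rel n).
Proof. move=> u; rewrite cycE; have := ltn_ord u; lia. Qed.

Definition Iv (a k : nat) : {set 'I_n} := [set i : 'I_n | (a <= i) && (i < a + k)].

Lemma Iv0 a : Iv a 0 = set0.
Proof. by apply/setP => i; rewrite !inE; lia. Qed.

Lemma IS_Iv_step a k (h : a + k < n) : a + k.+1 < n ->
  IS (@cycle_rel n) (Iv a k.+1) =
  (IS (@cycle_rel n) (Iv a k) - IS (@cycle_rel n) (Iv a k.-1))%R.
Proof.
move=> h1; pose v := Ordinal h.
have vI : v \in Iv a k.+1 by rewrite inE /=; lia.
rewrite (IS_rec cyc_sym cyc_irr vI).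
have -> : Iv a k.+1 :\ v = Iv a k.
  by apply/setP => u; rewrite !inE -val_eqE /= ?valE; lia.
suff -> : Iv a k.+1 :\: nbh (@cycle_rel n) v = Iv a k.-1 by [].
apply/setP => u; rewrite /nbh !inE cycE -val_eqE /= ?valE; have := ltn_ord u; lia.
Qed.

Lemma IS_Iv a k : a + k < n -> IS (@cycle_rel n) (Iv a k) = pv k.
Proof.
suff H : forall k, a + k.+1 < n -> IS (@cycle_rel n) (Iv a k) = pv k /\
                         IS (@cycle_rel n) (Iv a k.+1) = pv k.+1.
  case: k => [|k] hk; first by rewrite Iv0 IS0.
  by case: (H k hk).
clear k; elim => [|k IH] hk.
  rewrite Iv0 IS0; split => //.
  by rewrite (@IS_Iv_step a 0) ?addn0 //; [rewrite /= Iv0 IS0 subrr | lia].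
have [I1 I2] : _ /\ _ := IH ltac:(lia); split => //.
by rewrite (@IS_Iv_step a k.+1) //= ?I1 ?I2 //; lia.
Qed.

Lemma IS_cyc : IS (@cycle_rel n) setT = (pv (n - 1) - pv (n - 3))%R.
Proof.
have h : n.-1 < n by lia.
pose v := Ordinal h.
rewrite (IS_rec cyc_sym cyc_irr (in_setT v)).
rewrite -(@IS_Iv 0 (n - 1)); last by lia.
rewrite -(@IS_Iv 1 (n - 3)); last by lia.
have -> : setT :\ v = Iv 0 (n - 1).
  by apply/setP => u; rewrite !inE -val_eqE /= ?valE; have := ltn_ord u; lia.
suff -> : setT :\: nbh (@cycle_rel n) v = Iv 1 (n - 3) by [].
apply/setP => u; rewrite /nbh !inE cycE -val_eqE /= ?valE; have := ltn_ord u; lia.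
Qed.

End Cyc.


Section CycC.
Variable n : nat.
Hypothesis n4 : 3 < n.
Notation cyc := (@cycle_rel n).
Let csym := @cyc_sym n.
Let cirr : irreflexive cyc := @cyc_irr n n4.

Lemma cycS (u w : 'I_n) : cyc u w = (w == ordS u) || (u == ordS w).
Proof. by []. Qed.

Lemma cyc_S (u : 'I_n) : cyc u (ordS u).
Proof. by rewrite cycS eqxx. Qed.

Lemma Alpha_cycT : Alpha cyc setT = n./2.
Proof.
apply/eqP; rewrite eqn_leq; apply/andP; split.
  apply: Alpha_le => F _ /indepP iF.
  have dis : F :&: ((@ordS n) @: F) = set0.
    apply/setP => x; rewrite !inE; apply/negP => /andP[xF /imsetP[y yF xe]].
    by move: (iF y x yF xF); rewrite xe cyc_S.
  have E := cardsUI F ((@ordS n) @: F).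
  rewrite dis cards0 addn0 card_imset in E; last exact: ordS_inj.
  rewrite -divn2 leq_divRL // muln2 -addnn -E.
  by rewrite -[X in _ <= X]card_ord; apply: max_card.
have h2 (k : 'I_(n./2)) : k.*2.+1 < n.
  have := ltn_ord k; move: (nat_of_ord k) => k'; rewrite -divn2 -muln2 => h; have := divn_eq n 2; lia.
pose f (k : 'I_(n./2)) : 'I_n := Ordinal (ltnW (h2 k)).
have finj : injective f.
  by move=> a b /(congr1 val) /= /eqP; rewrite -!muln2 eqn_mul2r /= => /eqP/val_inj.
have -> : n./2 = #|f @: setT| by rewrite card_imset // cardsT card_ord.
apply: Alpha_ge; first exact: subsetT.
apply/indepP => x y /imsetP[a _ ->] /imsetP[b _ ->].
have key : forall a' b' : nat, b'.*2.+1 < n -> a'.*2.+1 < n ->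
  ~~ [|| b'.*2 == (a'.*2).+1, ((a'.*2).+1 == n) && (b'.*2 == 0),
         (a'.*2 == (b'.*2).+1) | ((b'.*2).+1 == n) && (a'.*2 == 0)].
  move=> a' b'; rewrite -!muln2; lia.
rewrite cycE //; exact: key _ _ (h2 b) (h2 a).
Qed.

Variable C : {set 'I_n}.
Hypothesis Cmax : maximal_independent cyc C.

Lemma C_indep : independent cyc C.
Proof. by case: Cmax. Qed.

Lemma max_nb w : w \notin C -> exists2 y, y \in C & cyc w y.
Proof.
move=> wC; case: (boolP [exists y in C, cyc w y]) => [/exists_inP[y yC wy] | H].
  by exists y.
case: Cmax => _ /(_ (w |: C)).
have : independent cyc (w |: C).
  rewrite (indepU1 csym cirr) C_indep /=; apply/forall_inP => u uC.
  by apply: contra H => wu; apply/exists_inP; exists u.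
move=> ind /(_ ind (subsetUr _ _)) /setP /(_ w).
by rewrite in_setU1 eqxx (negbTE wC).
Qed.

Lemma SC x : x \in C -> ordS x \notin C.
Proof.
move=> xC; apply/negP => sC; move/indepP: C_indep => /(_ x (ordS x) xC sC).
by rewrite cyc_S.
Qed.

Lemma Alpha_cycC : Alpha cyc (~: C) = #|C|.
Proof.
apply/eqP; rewrite eqn_leq; apply/andP; split.
  apply: Alpha_le => F sF /indepP iF.
  pose g w := if ordS w \in C then ordS w else ordS (ordS w).
  have gC w : w \in F -> g w \in C.
    move=> wF; have wC : w \notin C by move: (subsetP sF w wF); rewrite inE.
    rewrite /g; case: ifP => // /negbT sC.
    case: (max_nb sC) => y yC; rewrite cycS => /orP[/eqP<- // | /eqP/ordS_inj e].
    by move: wC; rewrite e yC.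
  have ginj : {in F &, injective g}.
    move=> a b aF bF; rewrite /g.
    case: ifP => ha; case: ifP => hb.
    - exact: ordS_inj.
    - by move/ordS_inj => e; move: (iF b a bF aF); rewrite cycS e eqxx ?orbT.
    - by move/ordS_inj => e; move: (iF a b aF bF); rewrite cycS -e eqxx ?orbT.
    - by move/ordS_inj/ordS_inj.
  rewrite -(card_in_imset ginj); apply: subset_leq_card.
  by apply/subsetP => y /imsetP[w wF ->]; apply: gC.
rewrite -(card_imset C (@ordS_inj n)).
apply: Alpha_ge.
  by apply/subsetP => y /imsetP[x xC ->]; rewrite inE SC.
apply/indepP => a b /imsetP[x xC ->] /imsetP[y yC ->].
rewrite !cycS !(inj_eq (@ordS_inj n)) -cycS.
by move/indepP: C_indep; apply.
Qed.

Lemma IS_cycC : IS cyc (~: C) = if n == 3 * #|C| then ((-1) ^+ #|C|)%R else 0%R.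
Proof.
set S := (@ordS n) @: C.
set P := (@ordS n) @^-1: C.
have cS : #|S| = #|C| by rewrite card_imset //; exact: ordS_inj.
have cP : #|P| = #|C| by rewrite card_preimset //; exact: ordS_inj.
have SP : S :|: P = ~: C.
  apply/setP => w; rewrite !inE; apply/idP/idP.
    case/orP => [/imsetP[x xC ->] | ]; first exact: SC.
    by apply: contraL => wC; apply: SC.
  move/max_nb => [y yC]; rewrite cycS => /orP[/eqP<- | /eqP->].
    by rewrite yC orbT.
  by rewrite imset_f.
have cC : #|~: C| = n - #|C| by rewrite cardsCs setCK card_ord.
have := cardsUI S P; rewrite SP cS cP cC => cnt.
case: (set_0Vmem (S :&: P)) => [SP0 | [w]].
  have n3 : n = 3 * #|C| by move: cnt; rewrite SP0 cards0; have := max_card C; rewrite card_ord; lia.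
  have n3b : n == 3 * #|C| by apply/eqP.
  rewrite n3b.
  apply: (IS_matching csym cirr); first by rewrite cC; lia.
  move=> w; rewrite inE => wC.
  have : w \in S :|: P by rewrite SP inE.
  rewrite inE => /orP[wS | wP].
    have wP : w \notin P.
      by apply/negP => wP; move/setP: SP0 => /(_ w); rewrite in_setI wS wP in_set0.
    exists (ordS w); apply/setP => x; rewrite !inE cycS.
    case: (x =P ordS w) => [->|xw] /=.
      by move: wP; rewrite inE => ->.
    case/imsetP: wS => y yC ->; rewrite (inj_eq (@ordS_inj n)).
    by case: (y =P x) => [<-|]; rewrite ?yC ?andbF ?andbT.
  have wS : w \notin S.
    by apply/negP => wS; move/setP: SP0 => /(_ w); rewrite in_setI wS wP in_set0.
  exists (ord_pred w); apply/setP => x; rewrite !inE cycS.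
  case: (x =P ord_pred w) => [->|xw] /=.
    rewrite ord_predK eqxx orbT andbT.
    by apply: contra wS => pC; rewrite -(ord_predK w) imset_f.
  move: wP; rewrite inE => wP.
  case: (x =P ordS w) => [->|_] /=; first by rewrite wP.
  case: (w =P ordS x) => [e|] //=; last by rewrite andbF.
  by case: xw; rewrite e ordSK.
rewrite inE => /andP[wS wP].
have n3 : n != 3 * #|C|.
  have : 0 < #|S :&: P| by apply/card_gt0P; exists w; rewrite inE wS.
  lia.
rewrite (negbTE n3).
apply: (IS_isolated csym cirr (v := w)).
  by rewrite -SP inE wS.
move=> u; rewrite inE => uC; rewrite cycS; apply/negP => /orP[/eqP e | /eqP e].
  by move: wP uC; rewrite inE -e => ->.
case/imsetP: wS => y yC; rewrite e => /ordS_inj e'.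
by move: uC; rewrite e' yC.
Qed.

End CycC.


Definition cycv (r : nat) : int :=
  match r with 0 => 2 | 1 => 1 | 2 => -1 | 3 => -2 | 4 => -1 | _ => 1 end%R.

Lemma arith n c : 3 < n -> c <= n./2 ->
 (cycv (n %% 6) - (if n == 3 * c then (if odd c then -1 else 1) else 0) =
   (if odd (maxn n./2 c.+1) then -1 else 1) :> int)%R <->
 (((n %% 12 == 0) || (n %% 12 == 3)) /\ c = (n + 2) %/ 3 \/
     ((n %% 12 == 4) || (n %% 12 == 7) || (n %% 12 == 8) || (n %% 12 == 11)) /\ c = n %/ 2
   \/ ((n %% 12 == 1) || (n %% 12 == 2) || (n %% 12 == 5) || (n %% 12 == 10)) /\ c <> n %/ 2).
Proof.
move=> n3 cn.
have h6 : n %% 6 < 6 by rewrite ltn_mod.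
idtac.
case hs: (odd (maxn n./2 c.+1)); case h3: (n == 3 * c); case hc: (odd c);
case E6: (n %% 6) h6 => [|[|[|[|[|[|k]]]]]] // _.
all: rewrite /cycv /=; lia.
Qed.


Lemma pv_SS k : pv k.+2 = (pv k.+1 - pv k)%R.
Proof. by case: k. Qed.

Lemma pv6 k : pv (6 + k) = pv k.
Proof. rewrite !addSn add0n !pv_SS; ring. Qed.

Lemma pvD k : (pv k.+2 - pv k)%R = cycv ((k + 3) %% 6).
Proof.
rewrite (divn_eq k 6) -modnDml modnMDl modn_mod.
have : k %% 6 < 6 by rewrite ltn_mod.
move: (k %/ 6) (k %% 6) => q r hr.
elim: q => [|q IH].
  by case: r hr => [|[|[|[|[|[|r]]]]]] //= _; rewrite ?pv_SS /=.
have -> : (q.+1 * 6 + r).+2 = 6 + (q * 6 + r).+2 by lia.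
rewrite pv6.
have -> : q.+1 * 6 + r = 6 + (q * 6 + r) by lia.
by rewrite pv6.
Qed.

Lemma signE (m : nat) : ((-1) ^+ m : int) = (if odd m then -1 else 1)%R.
Proof. by rewrite -signr_odd; case: (odd m). Qed.

Lemma Alpha_setT (N : nat) (e : rel 'I_N) : indep_num e = Alpha e setT.
Proof. by rewrite /Alpha /BG; apply: eq_bigl => F; rewrite subsetT. Qed.

Section Susp.
Variable n : nat.
Hypothesis n4 : 3 < n.
Variable C : {set 'I_n}.
Hypothesis Cmax : maximal_independent (@cycle_rel n) C.
Notation cyc := (@cycle_rel n).
Notation G := (suspension (@cycle_rel n) C).
Notation L := (@lift n.+1 ord_max).
Notation z := (@ord_max n).

Lemma G_L a b : G (L a) (L b) = cyc a b.
Proof. by rewrite /suspension !liftK. Qed.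

Lemma G_sym : symmetric G.
Proof.
move=> x y; rewrite /suspension.
by case: (unlift _ x) => [a|]; case: (unlift _ y) => [b|] //; apply: cyc_sym.
Qed.

Lemma G_irr : irreflexive G.
Proof. by move=> x; rewrite /suspension; case: (unlift _ x) => [a|] //; apply: cyc_irr. Qed.

Lemma notz_L (A : {set 'I_n}) : z \notin L @: A.
Proof. by apply/imsetP => [[a _ /eqP]]; rewrite (negbTE (neq_lift _ _)). Qed.

Lemma setTz : [set: 'I_n.+1] :\ z = L @: setT.
Proof.
have Linj : injective L := @lift_inj _ z.
apply/setP => u; case: (unliftP z u) => [a ->|->].
  by rewrite !inE eq_sym neq_lift imset_f.
by rewrite setD11 (negbTE (notz_L _)).
Qed.

Lemma setTNz : [set: 'I_n.+1] :\: nbh G z = L @: ~: C.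
Proof.
have Linj : injective L := @lift_inj _ z.
apply/setP => u; case: (unliftP z u) => [a ->|->].
  rewrite mem_imset //.
  rewrite /nbh !inE eq_sym (negbTE (neq_lift _ _)) /= /suspension unlift_none liftK.
  by rewrite andbT.
by rewrite /nbh !inE eqxx (negbTE (notz_L _)).
Qed.

Lemma IS_G : IS G setT = (IS cyc setT - IS cyc (~: C))%R.
Proof.
rewrite (IS_rec G_sym G_irr (in_setT z)) setTz setTNz.
by rewrite /IS !(BG_transport _ _ _ (@lift_inj _ _) G_L).
Qed.

Lemma alpha_G : indep_num G = maxn n./2 #|C|.+1.
Proof.
rewrite Alpha_setT (Alpha_rec G_sym G_irr (in_setT z)) setTz setTNz.
rewrite /Alpha !(BG_transport _ _ _ (@lift_inj _ _) G_L).
by rewrite -/(Alpha _ _) -/(Alpha _ _) Alpha_cycT // Alpha_cycC.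
Qed.

End Susp.

Theorem corollary6p4 (n : nat) (C : {set 'I_n}) :
  4 <= n ->
  maximal_independent (@cycle_rel n) C ->
  (pseudo_gorenstein_star (suspension (@cycle_rel n) C) <->
   [\/ (n %% 12 \in [:: 0; 3]) /\ #|C| = (n + 2) %/ 3,
       (n %% 12 \in [:: 4; 7; 8; 11]) /\ #|C| = n %/ 2
     | (n %% 12 \in [:: 1; 2; 5; 10]) /\ #|C| <> n %/ 2]).
Proof.
move=> n4 Cmax.
have cn : #|C| <= n./2.
  rewrite -(Alpha_cycT n4); apply: Alpha_ge; first exact: subsetT.
  exact: C_indep Cmax.
rewrite PG_iff (IS_G n4) (alpha_G n4 Cmax) (IS_cyc n4) (IS_cycC n4 Cmax).
have -> : (n - 1 = (n - 3).+2)%N by lia.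
rewrite pvD (_ : (n - 3 + 3 = n)%N); last by lia.
rewrite !signE (arith n4 cn) !inE !orbA.
split.
  by case=> [[A B]|[[A B]|[A B]]]; [constructor 1 | constructor 2 | constructor 3].
by case=> [[A B]|[A B]|[A B]]; [left | right; left | right; right].
Qed.
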